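(* Let $U=\{u_1,\dots,u_{3n}\}$ with $n\ge1$ and let $\mathcal{S}=\{S_1,\dots,S_p\}$, $p\ge 1$, be a family of $3$-element subsets of $U$. Fix an integer $m\ge 6n+3p$. Build the labeled complete bipartite graph $G$ with partite sets $V_1=\{x_1,\dots,x_{3n}\}\cup\{x(S_1),\dots,x(S_p)\}$ and $V_2=\{y_1,\dots,y_{3n}\}\cup\{y_k(S_i):1\le i\le p,\,1\le k\le m\}\cup\{z_1,\dots,z_{3n}\}$, with labels: $x_iy_j$ is $+$ iff $i=j$ or $u_i,u_j$ lie in a common member of $\mathcal{S}$; $x(S_i)y_k(S_\ell)$ is $+$ iff $i=\ell$; $x_iy_k(S_j)$ and $x(S_j)y_i$ are $+$ iff $u_i\in S_j$; $x_iz_j$ is $+$ for all $i,j$; $x(S_i)z_j$ is $-$ for all $i,j$. Assign tolerances $t_{x(S_i)}=3$ and $t_{x_i}=m(d(u_i)-1)+(c(u_i)-2)+(3n-3)$, where $d(u_i)$ is the number of members of $\mathcal{S}$ containing $u_i$ and $c(u_i)$ is the number of $u_j\in U\setminus\{u_i\}$ lying in a common member of $\mathcal{S}$ with $u_i$. Suppose $G$ has a clustering in which each $v\in V_1$ has at most $t_v$ incident errors. Then for every $u_j\in U$ there is a unique $S_i\in\mathcal{S}$ such that $x_j$ is in the same cluster as $x(S_i)$, and this $S_i$ satisfies: (1) $u_j\in S_i$, and (2) $x_j$ is in the same cluster as every vertex $y_\ell$ with $u_\ell\in S_i$.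
   Context: A clustering is a partition of $V(G)$. An error at a vertex $v$ is an incident edge that is a $+$ edge between different clusters or a $-$ edge within a cluster. *)

(* Defs.v *)
From HB Require Import structures.
From mathcomp Require Import all_boot all_order all_algebra.
Set Implicit Arguments. Unset Strict Implicit. Unset Printing Implicit Defensive.
Import Order.TTheory GRing.Theory Num.Theory.

(* V1 = {x_1..x_{3n}} + {x(S_1)..x(S_p)} *)
Definition V1 (n p : nat) : finType := ('I_(3 * n) + 'I_p)%type.
(* V2 = ({y_1..y_{3n}} + {y_k(S_i)}) + {z_1..z_{3n}};
   y_k(S_i) is represented as (i, k) *)
Definition V2 (n p m : nat) : finType :=
  ('I_(3 * n) + ('I_p * 'I_m) + 'I_(3 * n))%type.
Definition vert (n p m : nat) : finType := (V1 n p + V2 n p m)%type.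

Section Construction.
Variables (n p m : nat) (S : 'I_p -> {set 'I_(3 * n)}).

Definition together (i j : 'I_(3 * n)) : bool :=
  [exists l : 'I_p, (i \in S l) && (j \in S l)].

(* label of the edge v w (v in V1, w in V2): true = '+', false = '-' *)
Definition plus_edge (v : V1 n p) (w : V2 n p m) : bool :=
  match v, w with
  | inl i, inl (inl j) => (i == j) || together i j
  | inl i, inl (inr (l, _)) => i \in S l
  | inl _, inr _ => true
  | inr l, inl (inl i) => i \in S l
  | inr i, inl (inr (l, _)) => i == l
  | inr _, inr _ => false
  end.

(* number of errors at a vertex v of V1 under the clustering P
   (every edge at v goes to V2 since G is complete bipartite) *)
Definition errors (P : {set {set vert n p m}}) (v : V1 n p) : nat :=
  #|[set w : V2 n p m |
      (plus_edge v w && (pblock P (inl v) != pblock P (inr w)))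
   || (~~ plus_edge v w && (pblock P (inl v) == pblock P (inr w)))]|.

Definition dS (i : 'I_(3 * n)) : nat := #|[set l : 'I_p | i \in S l]|.
Definition cS (i : 'I_(3 * n)) : nat :=
  #|[set j : 'I_(3 * n) | (j != i) && together i j]|.

(* tolerances (integers, since they may be negative) *)
Definition tol (v : V1 n p) : int :=
  match v with
  | inl i => (m%:Z * ((dS i)%:Z - 1) + ((cS i)%:Z - 2) + ((3 * n)%:Z - 3))%R
  | inr _ => 3%:Z
  end.

End Construction.

(* Main.v *)
Require Import Defs.
From mathcomp Require Import all_boot all_order all_algebra.
From mathcomp Require Import zify.
Import Order.TTheory GRing.Theory Num.Theory.

Lemma sumb_card (T : finType) (b : pred T) :
  (\sum_(x : T) (b x : nat) = #|[set x | b x]|)%N.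
Proof.
rewrite -sum1_card [RHS]big_mkcond; apply: eq_bigr => x _; rewrite inE; by case: (b x).
Qed.

Set Implicit Arguments. Unset Strict Implicit.
Section H.
Variables (n p m : nat) (S : 'I_p -> {set 'I_(3 * n)}) (P : {set {set vert n p m}}).

Definition err (v : V1 n p) (w : V2 n p m) : bool :=
  (plus_edge S v w && (pblock P (inl v) != pblock P (inr w)))
   || (~~ plus_edge S v w && (pblock P (inl v) == pblock P (inr w))).

Lemma errorsE v : errors S P v = (\sum_w (err v w : nat))%N.
Proof. by rewrite sumb_card. Qed.

Definition hg (A : pred 'I_(3*n)) (Q : pred 'I_p) (zb : bool) (w : V2 n p m) : bool :=
  match w with inl (inl l) => A l | inl (inr (l, _)) => Q l | inr _ => zb end.

Lemma sum_hg A Q zb :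
  (\sum_(w : V2 n p m) (hg A Q zb w : nat) =
   #|[set l | A l]| + #|[set l | Q l]| * m + zb * (3 * n))%N.
Proof.
rewrite big_sumType /= big_sumType /= -!sumb_card.
congr (_ + _ + _); last by rewrite sum_nat_const card_ord mulnC.
rewrite (eq_bigr (fun i => (Q i.1 : nat))); last by case.
rewrite -(pair_bigA _ (fun l (k:'I_m) => (Q l : nat))) /= big_distrl /=.
apply: eq_bigr => l _; by rewrite sum_nat_const card_ord mulnC.
Qed.


Notation B := (pblock P).

Lemma uniq_pt (i i' : 'I_p) w : i' != i ->
  B (inl (inr i)) = B (inl (inr i')) ->
  (hg pred0 (pred1 i) false w <= err (inr i) w + err (inr i') w)%N.
Proof.
move=> ne e; case: w => [[l|[l k]]|z] //=.
rewrite /err /=; case: eqP => [->|_] //=.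
rewrite eqxx /= e (negbTE ne) /=.
by case: (B _ == B _).
Qed.

Lemma uniq_count (i i' : 'I_p) : i' != i ->
  B (inl (inr i)) = B (inl (inr i')) ->
  (m <= errors S P (inr i) + errors S P (inr i'))%N.
Proof.
move=> ne e; rewrite !errorsE -big_split /=.
apply: leq_trans (_ : _ <= \sum_w (hg pred0 (pred1 i) false w : nat))%N _; last first.
  by apply: leq_sum => w _; exact: uniq_pt.
rewrite sum_hg.
have -> : [set l | pred1 i l] = [set i] by apply/setP => l; rewrite !inE.
by rewrite cards1 mul1n /= mul0n addn0 leq_addl.
Qed.

Lemma exist_pt (j : 'I_(3 * n)) w :
  (forall l, j \in S l -> B (inl (inl j)) != B (inl (inr l))) ->
  (hg pred0 (fun l => j \in S l) false w <=
   err (inl j) w + \sum_l ((j \in S l) * err (inr l) w))%N.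
Proof.
move=> hne; case: w => [[l|[l k]]|z] //=.
case Hjl: (j \in S l) => //=.
rewrite (bigD1 l) //= Hjl mul1n.
apply: (@leq_trans (err (inl j) (inl (inr (l, k))) + err (inr l) (inl (inr (l, k))))); last first.
  by rewrite leq_add2l leq_addr.
rewrite /err /= Hjl eqxx /=.
case: eqP => [e1|] //=; case: eqP => [e2|] //=.
by move: (hne l Hjl); rewrite e1 e2 eqxx.
Qed.

Lemma exist_count (j : 'I_(3 * n)) :
  (forall l, j \in S l -> B (inl (inl j)) != B (inl (inr l))) ->
  (#|[set l | j \in S l]| * m <=
   errors S P (inl j) + \sum_l ((j \in S l) * errors S P (inr l)))%N.
Proof.
move=> hne.
have -> : (\sum_l ((j \in S l) * errors S P (inr l)) =
          \sum_w \sum_l ((j \in S l) * err (inr l) w))%N.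
  rewrite exchange_big /=; apply: eq_bigr => l _.
  by rewrite errorsE big_distrr.
rewrite errorsE -big_split /=.
apply: leq_trans (_ : _ <= \sum_w (hg pred0 (fun l => j \in S l) false w : nat))%N _; last first.
  by apply: leq_sum => w _; exact: exist_pt.
by rewrite sum_hg /= mul0n addn0 leq_addl.
Qed.

Lemma tog_in (i : 'I_p) (j l : 'I_(3 * n)) : j \in S i -> l \in S i -> together S j l.
Proof. by move=> h1 h2; apply/existsP; exists i; rewrite h1 h2. Qed.

Lemma step2_pt (i : 'I_p) (j l0 : 'I_(3 * n)) w :
  j \in S i -> l0 \in S i ->
  B (inl (inr i)) = B (inl (inl j)) ->
  B (inr (inl (inl l0))) != B (inl (inl j)) ->
  (hg (fun l => ((j == l) || together S j l) && (l \notin S i))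
      (fun l => (l != i) && (j \in S l)) true w
   + 2 * (w == inl (inl l0)) <= err (inl j) w + err (inr i) w)%N.
Proof.
move=> ji l0i ei bad; rewrite /err /= ei.
case: w => [[l|[l k]]|z] /=.
- rewrite -[inl (inl l) == _]/(l == l0).
  case Hl: (l \in S i) => /=.
    rewrite (tog_in ji Hl) orbT /=.
    case: (eqVneq l l0) => [el|nel] /=.
      by rewrite el eq_sym (negbTE bad).
    by case: (_ == _).
  case: (eqVneq l l0) => [el|nel] /=; first by rewrite el l0i in Hl.
  by case: (_ || _); case: (_ == _).
- rewrite addn0; case: (eqVneq l i) => [->|nel] /=; first by [].
  by case: (j \in S l); case: (_ == _).
- by case: (_ == _).
Qed.


Lemma step2_count (i : 'I_p) (j l0 : 'I_(3 * n)) :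
  j \in S i -> l0 \in S i ->
  B (inl (inr i)) = B (inl (inl j)) ->
  B (inr (inl (inl l0))) != B (inl (inl j)) ->
  (#|[set l | ((j == l) || together S j l) && (l \notin S i)]|
   + #|[set l | (l != i) && (j \in S l)]| * m + 3 * n + 2
   <= errors S P (inl j) + errors S P (inr i))%N.
Proof.
move=> ji l0i ei bad; rewrite !errorsE -big_split /=.
set A := (fun l => ((j == l) || together S j l) && (l \notin S i)).
set Q := (fun l => (l != i) && (j \in S l)).
apply: leq_trans (_ : _ <= \sum_w (hg A Q true w + 2 * (w == inl (inl l0)) : nat))%N _; last first.
  by apply: leq_sum => w _; exact: step2_pt.
rewrite big_split /= sum_hg mul1n -big_distrr /= sumb_card.
have -> : [set w : V2 n p m | w == inl (inl l0)] = [set inl (inl l0)].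
  by apply/setP => w; rewrite !inE.
by rewrite cards1.
Qed.

Lemma card_Q (i : 'I_p) (j : 'I_(3 * n)) : j \in S i ->
  (#|[set l | (l != i) && (j \in S l)]| + 1 = dS S j)%N.
Proof.
move=> ji; rewrite /dS [RHS](cardsD1 i) inE ji addnC; congr (_ + _).
by apply: eq_card => l; rewrite !inE.
Qed.

Lemma card_T (i : 'I_p) (j : 'I_(3 * n)) : j \in S i -> #|S i| = 3 ->
  (#|[set l | ((j == l) || together S j l) && (l \notin S i)]| + 3 = cS S j + 1)%N.
Proof.
move=> ji c3.
set Tg := [set l | (j == l) || together S j l].
have -> : [set l | ((j == l) || together S j l) && (l \notin S i)] = Tg :\: S i.
  by apply/setP => l; rewrite !inE andbC.
have sub : S i \subset Tg.
  by apply/subsetP => l li; rewrite inE (tog_in ji li) orbT.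
have e1 : #|Tg| = (cS S j + 1)%N.
  rewrite (cardsD1 j) inE eqxx /= addnC; congr (_ + _).
  by apply: eq_card => l; rewrite !inE; case: (eqVneq l j) => [->|nlj] //=; rewrite eq_sym (negbTE nlj).
rewrite -e1 -(cardsID (S i) Tg) (setIidPr sub) c3 addnC.
done.
Qed.

End H.
Unset Implicit Arguments. Set Strict Implicit.

Theorem lemma4 (n p m : nat) (S : 'I_p -> {set 'I_(3 * n)})
  (P : {set {set vert n p m}}) :
  (1 <= n)%N -> (1 <= p)%N ->
  injective S ->
  (forall i, #|S i| = 3) ->
  (6 * n + 3 * p <= m)%N ->
  partition P [set: vert n p m] ->
  (forall v : V1 n p, ((@errors n p m S P v)%:Z <= @tol n p m S v)%R) ->
  forall j : 'I_(3 * n),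
    exists i : 'I_p,
      [/\ pblock P (inl (inl j)) = pblock P (inl (inr i)),
          (forall i' : 'I_p,
              pblock P (inl (inl j)) = pblock P (inl (inr i')) -> i' = i),
          j \in S i &
          (forall l : 'I_(3 * n), l \in S i ->
              pblock P (inl (inl j)) = pblock P (inr (inl (inl l))))].

Proof.
move=> n1 p1 injS c3 hm _ H j.
have E3 : forall l, (errors S P (inr l) <= 3)%N.
  by move=> l; have := H (inr l); rewrite /=; lia.
have Ej := H (inl j); rewrite /= in Ej.
have em : (m%:Z * ((dS S j)%:Z - 1) = (dS S j * m)%:Z - m%:Z)%R.
  by rewrite mulrBr mulr1 mulnC PoszM.
have Ej2 : ((errors S P (inl j))%:Z <= (dS S j * m)%:Z - m%:Z + ((cS S j)%:Z - 2) + ((3*n)%:Z - 3))%R.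
  by rewrite -em.
clear Ej em.
have cle : (cS S j <= 3 * n)%N.
  by rewrite /cS; apply: leq_trans (max_card _) _; rewrite card_ord.
have dle : (dS S j <= p)%N.
  by rewrite /dS; apply: leq_trans (max_card _) _; rewrite card_ord.
have [i ji bi] : exists2 i, j \in S i & pblock P (inl (inl j)) = pblock P (inl (inr i)).
  case: (pickP (fun i => (j \in S i) && (pblock P (inl (inl j)) == pblock P (inl (inr i))))) => [i /andP[a /eqP b]|none]; first by exists i.
  exfalso.
  have hne : forall l, j \in S l -> pblock P (inl (inl j)) != pblock P (inl (inr l)).
    by move=> l jl; apply/negP => e; have := none l; rewrite /= jl e.
  have h1 := exist_count hne.
  have h2 : (\sum_l ((j \in S l) * errors S P (inr l)) <= dS S j * 3)%N.
    rewrite /dS -sumb_card big_distrl /=; apply: leq_sum => l _.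
    by case: (j \in S l); rewrite ?mul1n ?mul0n ?E3.
  rewrite -/(dS S j) in h1.
  have h3 : (dS S j * m <= errors S P (inl j) + dS S j * 3)%N.
    by apply: leq_trans h1 _; rewrite leq_add2l.
  lia.
exists i; split => //.
- move=> i' e'; apply/eqP; apply/negPn/negP => ne.
  have := uniq_count S ne (etrans (esym bi) e').
  have a1 : (errors S P (inr i) <= 3)%N := E3 i.
  have a2 : (errors S P (inr i') <= 3)%N := E3 i'.
  lia.
- move=> l li; apply/eqP; apply/negPn/negP => bad.
  rewrite eq_sym in bad.
  have := step2_count ji li (esym bi) bad.
  have cT := card_T ji (c3 i).
  have cQ := card_Q ji.
  rewrite -cQ mulnDl mul1n in Ej2.
  have a1 : (errors S P (inr i) <= 3)%N := E3 i.
  lia.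
Qed.
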